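(* Let $n\ge1$ and $0\le j\le n$. Then \[ \sum_{m=1}^\infty\frac{e_j(m)h_{n-j}(m)}{m^2}=\begin{cases}(n+1)\zeta(n+2), & j=0,\\ \displaystyle\sum_{p=j}^n\binom{p-1}{j-1}S^T_{n+2,p}+\binom{n+1}{j+1}\zeta(n+2), & j\ge1.\end{cases} \]
   Context: For a symmetric function $u$ and $m\ge1$, $u(m)$ denotes $u$ evaluated at $x_r=1/r$ for $r\le m$ and $x_r=0$ for $r>m$; $e_j$, $h_i$ are the elementary and complete symmetric functions. Equivalently $e_j(m)=P_j(H_m,\dots,H_m^{(j)})$ and $h_i(m)=Q_i(H_m,\dots,H_m^{(i)})$ with $H_m^{(r)}=\sum_{t=1}^m t^{-r}$. Multiple zeta values: $\zeta(a_1,\dots,a_k)=\sum_{n_1>\cdots>n_k\ge1}n_1^{-a_1}\cdots n_k^{-a_k}$ for positive integers with $a_1\ge2$; weight is $a_1+\dots+a_k$, depth is $k$. For $N\ge2$ and $1\le k<N$, $S^T_{N,k}$ denotes the sum of all multiple zeta values $\zeta(a_1,\dots,a_k)$ of weight $N$ and depth $k$ with $a_1\ge3$. *)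

(* Defs.v *)
From Stdlib Require Import Reals List Arith ClassicalEpsilon.
Import ListNotations.
Open Scope R_scope.

Definition Rsum_list (l : list R) : R := fold_right Rplus 0 l.

(* e_j(m) = sum over m >= i_1 > i_2 > ... > i_j >= 1 of 1/(i_1 ... i_j),
   i.e. the elementary symmetric function e_j at x_r = 1/r (r <= m), 0 else. *)
Fixpoint e_sym (j m : nat) : R :=
  match j with
  | O => 1
  | S j' => Rsum_list (map (fun r => / INR r * e_sym j' (r - 1)) (seq 1 m))
  end.

(* h_i(m) = sum over m >= i_1 >= i_2 >= ... >= i_i >= 1 of 1/(i_1 ... i_i),
   the complete symmetric function h_i at x_r = 1/r (r <= m), 0 else. *)
Fixpoint h_sym (i m : nat) : R :=
  match i with
  | O => 1
  | S i' => Rsum_list (map (fun r => / INR r * h_sym i' r) (seq 1 m))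
  end.

(* Truncated multiple zeta sum:
   sum over N >= n_1 > n_2 > ... > n_k >= 1 of prod n_t^{-a_t}. *)
Fixpoint mzv_partial (a : list nat) (N : nat) : R :=
  match a with
  | [] => 1
  | a1 :: rest =>
      Rsum_list (map (fun n1 => / (INR n1 ^ a1) * mzv_partial rest (n1 - 1)) (seq 1 N))
  end.

(* zeta(a_1,...,a_k) = lim_{N -> oo} of the truncated sums
   (the limit exists when a_1 >= 2; value is unspecified otherwise). *)
Definition mzv (a : list nat) : R :=
  epsilon (inhabits 0) (fun l => Un_cv (mzv_partial a) l).

Fixpoint compositions (k N : nat) : list (list nat) :=
  match k with
  | O => match N with O => [[]] | S _ => [] end
  | S k' => flat_map (fun a => map (cons a) (compositions k' (N - a))) (seq 1 N)
  end.

Definition S_T (N k : nat) : R :=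
  Rsum_list (map mzv
    (filter (fun a => match a with a1 :: _ => Nat.leb 3 a1 | [] => false end)
            (compositions k N))).

(* Main.v *)
Require Import Defs.
From Stdlib Require Import Reals List Arith Lia Lra ZArith ClassicalEpsilon.
Import ListNotations.
Open Scope R_scope.

Lemma cv_const (c : R) : Un_cv (fun _ => c) c.
Proof. intros e He; exists 0%nat; intros; unfold Rdist; rewrite Rminus_diag, Rabs_R0; lra. Qed.

Lemma cv_ext (u v : nat -> R) l : (forall n, u n = v n) -> Un_cv u l -> Un_cv v l.
Proof. intros H Hu e He; destruct (Hu e He) as [N HN]; exists N; intros; rewrite <- H; auto. Qed.

Lemma cv_ext_ev (u v : nat -> R) l N0 : (forall n, (n >= N0)%nat -> u n = v n) -> Un_cv u l -> Un_cv v l.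
Proof. intros H Hu e He; destruct (Hu e He) as [N HN]; exists (max N N0); intros n Hn;
  rewrite <- H by lia; apply HN; lia. Qed.

Lemma cv_scal (u : nat -> R) l c : Un_cv u l -> Un_cv (fun n => c * u n) (c * l).
Proof. intros; apply CV_mult; auto; apply cv_const. Qed.

Lemma cv_shift (u : nat -> R) l : Un_cv u l -> Un_cv (fun n => u (S n)) l.
Proof. intros Hu e He; destruct (Hu e He) as [N HN]; exists N; intros; apply HN; lia. Qed.

Lemma cv_unshift (u : nat -> R) l : Un_cv (fun n => u (S n)) l -> Un_cv u l.
Proof. intros Hu e He; destruct (Hu e He) as [N HN]; exists (S N); intros n Hn;
  destruct n; [lia|]; apply HN; lia. Qed.

Lemma cv_squeeze (u v w : nat -> R) l :
  (forall n, u n <= v n <= w n) -> Un_cv u l -> Un_cv w l -> Un_cv v l.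
Proof.
  intros H Hu Hw e He. destruct (Hu e He) as [N1 H1]; destruct (Hw e He) as [N2 H2].
  exists (max N1 N2); intros n Hn. specialize (H1 n ltac:(lia)); specialize (H2 n ltac:(lia)).
  specialize (H n). unfold Rdist in *. apply Rabs_def2 in H1; apply Rabs_def2 in H2.
  apply Rabs_def1; lra.
Qed.

Lemma cv_le (u v : nat -> R) l1 l2 : (forall n, u n <= v n) -> Un_cv u l1 -> Un_cv v l2 -> l1 <= l2.
Proof.
  intros H Hu Hv. destruct (Rle_or_lt l1 l2) as [|Hlt]; auto.
  set (e := (l1 - l2)/2). assert (He: e > 0) by (unfold e; lra).
  destruct (Hu e He) as [N1 H1]; destruct (Hv e He) as [N2 H2].
  specialize (H1 (max N1 N2) ltac:(lia)); specialize (H2 (max N1 N2) ltac:(lia)).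
  specialize (H (max N1 N2)). unfold Rdist in *. apply Rabs_def2 in H1; apply Rabs_def2 in H2.
  unfold e in *; lra.
Qed.

Lemma cv_le_const (u : nat -> R) l c : (forall n, u n <= c) -> Un_cv u l -> l <= c.
Proof. intros; eapply (cv_le u (fun _ => c)); eauto; apply cv_const. Qed.

Lemma cv_ge_const (u : nat -> R) l c : (forall n, c <= u n) -> Un_cv u l -> c <= l.
Proof. intros; eapply (cv_le (fun _ => c) u); eauto; apply cv_const. Qed.

Lemma cv_growing_bounded (u : nat -> R) c :
  (forall n, u n <= u (S n)) -> (forall n, u n <= c) -> exists l, Un_cv u l /\ l <= c.
Proof.
  intros Hg Hb. destruct (growing_cv u) as [l Hl].
  - intro n; apply Hg.
  - exists c; intros x [n ->]; apply Hb.
  - exists l; split; auto; eapply cv_le_const; eauto.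
Qed.

Lemma cv_unique (u : nat -> R) l1 l2 : Un_cv u l1 -> Un_cv u l2 -> l1 = l2.
Proof. apply UL_sequence. Qed.

Definition sumR (f : nat -> R) (a n : nat) : R := Rsum_list (map f (seq a n)).

Lemma Rsum_list_app l1 l2 : Rsum_list (l1 ++ l2) = Rsum_list l1 + Rsum_list l2.
Proof. induction l1; simpl; [lra|]. unfold Rsum_list in *; simpl; rewrite IHl1; lra. Qed.

Lemma Rsum_list_cons x l : Rsum_list (x :: l) = x + Rsum_list l.
Proof. reflexivity. Qed.

Lemma sumR_0 f a : sumR f a 0 = 0.
Proof. reflexivity. Qed.

Lemma sumR_S f a n : sumR f a (S n) = sumR f a n + f (a + n)%nat.
Proof. unfold sumR; rewrite seq_S, map_app, Rsum_list_app; simpl; unfold Rsum_list; simpl; lra. Qed.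

Lemma sumR_Sl f a n : sumR f a (S n) = f a + sumR f (S a) n.
Proof. reflexivity. Qed.

Lemma sumR_ext f g a n : (forall k, (a <= k < a + n)%nat -> f k = g k) -> sumR f a n = sumR g a n.
Proof.
  revert a; induction n; intros a H; [reflexivity|]. rewrite !sumR_Sl, (H a) by lia.
  rewrite IHn; auto; intros; apply H; lia.
Qed.

Lemma sumR_plus f g a n : sumR (fun k => f k + g k) a n = sumR f a n + sumR g a n.
Proof. revert a; induction n; intros; [unfold sumR; simpl; unfold Rsum_list; simpl; lra|].
  rewrite !sumR_Sl, IHn; lra. Qed.

Lemma sumR_minus f g a n : sumR (fun k => f k - g k) a n = sumR f a n - sumR g a n.
Proof. revert a; induction n; intros; [unfold sumR; simpl; unfold Rsum_list; simpl; lra|].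
  rewrite !sumR_Sl, IHn; lra. Qed.

Lemma sumR_scal c f a n : sumR (fun k => c * f k) a n = c * sumR f a n.
Proof. revert a; induction n; intros; [unfold sumR; simpl; unfold Rsum_list; simpl; lra|].
  rewrite !sumR_Sl, IHn; lra. Qed.

Lemma sumR_zero a n : sumR (fun _ => 0) a n = 0.
Proof. revert a; induction n; intros; [reflexivity|]. rewrite sumR_Sl, IHn; lra. Qed.

Lemma sumR_nonneg f a n : (forall k, 0 <= f k) -> 0 <= sumR f a n.
Proof. intros H; revert a; induction n; intros; [unfold sumR; simpl; unfold Rsum_list; simpl; lra|].
  rewrite sumR_Sl; specialize (IHn (S a)); specialize (H a); lra. Qed.

Lemma sumR_le f g a n : (forall k, f k <= g k) -> sumR f a n <= sumR g a n.
Proof. intros H; revert a; induction n; intros; [unfold sumR; simpl; unfold Rsum_list; simpl; lra|].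
  rewrite !sumR_Sl; specialize (IHn (S a)); specialize (H a); lra. Qed.

Lemma sumR_swap (f : nat -> nat -> R) a n b m :
  sumR (fun x => sumR (fun y => f x y) b m) a n = sumR (fun y => sumR (fun x => f x y) a n) b m.
Proof.
  revert a; induction n; intros a.
  - rewrite sumR_0. symmetry; apply sumR_zero.
  - rewrite sumR_Sl, IHn. rewrite <- sumR_plus. apply sumR_ext; intros. rewrite sumR_Sl; lra.
Qed.

Lemma sumR_split f a n m : sumR f a (n + m) = sumR f a n + sumR f (a + n) m.
Proof. revert a; induction n; intros; simpl. { rewrite Nat.add_0_r; unfold sumR at 2; simpl; unfold Rsum_list; simpl; lra. }
  rewrite !sumR_Sl, IHn. replace (S a + n)%nat with (a + S n)%nat by lia; lra. Qed.

Lemma sum_f_R0_sumR f n : sum_f_R0 f n = sumR f 0 (S n).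
Proof. induction n; simpl. { unfold sumR; simpl; unfold Rsum_list; simpl; lra. }
  rewrite IHn, (sumR_S f 0 (S n)); simpl; lra. Qed.

Lemma Rsum_list_map_sumR {A} (l : list A) (f : A -> nat -> R) a n :
  Rsum_list (map (fun x => sumR (f x) a n) l) = sumR (fun k => Rsum_list (map (fun x => f x k) l)) a n.
Proof.
  induction l; cbn [map]. { symmetry; apply sumR_zero. }
  rewrite !Rsum_list_cons, IHl, <- sumR_plus; reflexivity.
Qed.

Lemma Rsum_list_map_plus {A} (l : list A) f g :
  Rsum_list (map (fun x => f x + g x) l) = Rsum_list (map f l) + Rsum_list (map g l).
Proof. induction l; cbn [map]; [unfold Rsum_list; simpl; lra|]. rewrite !Rsum_list_cons, IHl; lra. Qed.

Lemma Rsum_list_map_scal {A} (l : list A) c f :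
  Rsum_list (map (fun x => c * f x) l) = c * Rsum_list (map f l).
Proof. induction l; cbn [map]; [unfold Rsum_list; simpl; lra|]. rewrite !Rsum_list_cons, IHl; lra. Qed.

Lemma Rsum_list_map_ext {A} (l : list A) f g : (forall x, In x l -> f x = g x) ->
  Rsum_list (map f l) = Rsum_list (map g l).
Proof. intros H; induction l; cbn [map]; auto. rewrite !Rsum_list_cons, H, IHl; simpl; auto. intros; apply H; simpl; auto. Qed.

Lemma Rsum_list_flat_map {A B} (l : list A) (g : A -> list B) (f : B -> R) :
  Rsum_list (map f (flat_map g l)) = Rsum_list (map (fun x => Rsum_list (map f (g x))) l).
Proof. induction l; cbn [map flat_map]; auto. rewrite map_app, Rsum_list_app, Rsum_list_cons, IHl; auto. Qed.

Lemma Rsum_list_nonneg {A} (l : list A) f : (forall x, 0 <= f x) -> 0 <= Rsum_list (map f l).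
Proof. intros H; induction l; cbn [map]; [unfold Rsum_list; simpl; lra|]. rewrite Rsum_list_cons; specialize (H a); lra. Qed.

Lemma cv_sumR (F : nat -> nat -> R) (L : nat -> R) a n :
  (forall k, Un_cv (fun N => F N k) (L k)) -> Un_cv (fun N => sumR (F N) a n) (sumR L a n).
Proof.
  revert a; induction n; intros a H.
  - rewrite sumR_0; eapply cv_ext; [intro; symmetry; apply sumR_0|]; apply cv_const.
  - eapply cv_ext. { intro N; symmetry; apply sumR_Sl. } rewrite sumR_Sl. apply CV_plus; auto.
Qed.

Lemma cv_Rsum_list {A} (l : list A) (F : nat -> A -> R) (L : A -> R) :
  (forall x, In x l -> Un_cv (fun N => F N x) (L x)) ->
  Un_cv (fun N => Rsum_list (map (F N) l)) (Rsum_list (map L l)).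
Proof.
  induction l; intros H; cbn [map]. { unfold Rsum_list; simpl; apply cv_const. }
  eapply cv_ext. { intro N; symmetry; apply Rsum_list_cons. } rewrite Rsum_list_cons.
  apply CV_plus; [apply H; simpl; auto|apply IHl; intros; apply H; simpl; auto].
Qed.

Lemma INR_S_pos m : 0 < INR (S m).
Proof. apply lt_0_INR; lia. Qed.
Lemma INR_S_neq m : INR (S m) <> 0.
Proof. pose proof (INR_S_pos m); lra. Qed.

Lemma e_sym_S j m : e_sym (S j) (S m) = e_sym (S j) m + / INR (S m) * e_sym j m.
Proof. change (sumR (fun r => / INR r * e_sym j (r - 1)) 1 (S m) = sumR (fun r => / INR r * e_sym j (r - 1)) 1 m + / INR (S m) * e_sym j m).
  rewrite sumR_S. simpl (1 + m)%nat. replace (S m - 1)%nat with m by lia. reflexivity. Qed.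

Lemma h_sym_S i m : h_sym (S i) (S m) = h_sym (S i) m + / INR (S m) * h_sym i (S m).
Proof. change (sumR (fun r => / INR r * h_sym i r) 1 (S m) = sumR (fun r => / INR r * h_sym i r) 1 m + / INR (S m) * h_sym i (S m)).
  rewrite sumR_S. reflexivity. Qed.

Lemma e_sym_0 j : e_sym (S j) 0 = 0.
Proof. reflexivity. Qed.
Lemma h_sym_0 i : h_sym (S i) 0 = 0.
Proof. reflexivity. Qed.

Lemma mz_S c b N : mzv_partial (c :: b) (S N) = mzv_partial (c :: b) N + / (INR (S N) ^ c) * mzv_partial b N.
Proof. change (sumR (fun n1 => / (INR n1 ^ c) * mzv_partial b (n1 - 1)) 1 (S N) =
   sumR (fun n1 => / (INR n1 ^ c) * mzv_partial b (n1 - 1)) 1 N + / (INR (S N) ^ c) * mzv_partial b N).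
  rewrite sumR_S. simpl (1 + N)%nat. replace (S N - 1)%nat with N by lia. reflexivity. Qed.

Lemma mz_0 c b : mzv_partial (c :: b) 0 = 0.
Proof. reflexivity. Qed.

Lemma e_sym_nonneg j m : 0 <= e_sym j m.
Proof. revert m; induction j; intros m; simpl; [lra|]. apply Rsum_list_nonneg. intros r.
  destruct r; simpl; [rewrite Rinv_0; lra|]. apply Rmult_le_pos; auto. left; apply Rinv_0_lt_compat, INR_S_pos. Qed.

Lemma h_sym_nonneg i m : 0 <= h_sym i m.
Proof. revert m; induction i; intros m; simpl; [lra|]. apply Rsum_list_nonneg. intros r.
  destruct r; simpl; [rewrite Rinv_0; lra|]. apply Rmult_le_pos; auto. left; apply Rinv_0_lt_compat, INR_S_pos. Qed.

Lemma mz_nonneg a N : 0 <= mzv_partial a N.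
Proof. revert N; induction a; intros N; simpl; [lra|]. apply Rsum_list_nonneg. intros r.
  apply Rmult_le_pos; auto. destruct r; simpl. { destruct a; simpl; [lra|]. rewrite Rmult_0_l, Rinv_0; lra. }
  left; apply Rinv_0_lt_compat, pow_lt, INR_S_pos. Qed.

(* coefficient of t^j in prod_{r=1}^m (r + t) *)
Fixpoint Aco (j m : nat) : R :=
  match m with
  | O => match j with O => 1 | _ => 0 end
  | S m' => INR (S m') * Aco j m' + match j with O => 0 | S j' => Aco j' m' end
  end.

Lemma Aco_e j m : Aco j m = INR (fact m) * e_sym j m.
Proof.
  revert j; induction m; intros j.
  - destruct j; simpl; lra.
  - destruct j.
    + cbn [Aco]. rewrite IHm. change (fact (S m)) with (S m * fact m)%nat. rewrite mult_INR. cbn [e_sym]; ring.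
    + cbn [Aco]. rewrite !IHm, e_sym_S. change (fact (S m)) with (S m * fact m)%nat. rewrite mult_INR.
      field. apply INR_S_neq.
Qed.

Lemma Aco_nonneg j m : 0 <= Aco j m.
Proof. rewrite Aco_e. apply Rmult_le_pos; [apply pos_INR|apply e_sym_nonneg]. Qed.

(* coefficient of s^i in prod_{r in l} 1/(r - s) *)
Fixpoint G (i : nat) : list nat -> R :=
  match i with
  | O => fix G0 l := match l with [] => 1 | r :: l' => G0 l' / INR r end
  | S i' => fix Gl l := match l with [] => 0 | r :: l' => (Gl l' + G i' (r :: l')) / INR r end
  end.

Definition Gp (i : nat) (l : list nat) : R := match i with O => 0 | S i' => G i' l end.

Lemma G_cons i r l : INR r <> 0 -> INR r * G i (r :: l) = G i l + Gp i (r :: l).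
Proof. intros H; destruct i; simpl; field; auto. Qed.

Lemma G_nil0 : G 0 [] = 1.
Proof. reflexivity. Qed.
Lemma G_nilS i : G (S i) [] = 0.
Proof. reflexivity. Qed.

Definition posl (l : list nat) := Forall (fun r => (0 < r)%nat) l.

Lemma INR_pos_neq r : (0 < r)%nat -> INR r <> 0.
Proof. intros; apply not_0_INR; lia. Qed.

Lemma G_app i l r : posl l -> (0 < r)%nat -> INR r * G i (l ++ [r]) = G i l + Gp i (l ++ [r]).
Proof.
  intros Hl Hr. revert i. induction l as [|x l' IH]; intros i.
  - simpl. apply G_cons, INR_pos_neq; auto.
  - inversion Hl as [|? ? Hx Hl']; subst. specialize (IH Hl').
    pose proof (INR_pos_neq x Hx) as Hx0.
    induction i.
    + cbn [app]. change (G 0 (x :: l' ++ [r])) with (G 0 (l' ++ [r]) / INR x).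
      change (G 0 (x :: l')) with (G 0 l' / INR x). specialize (IH 0%nat). simpl Gp in *.
      replace (INR r * (G 0 (l' ++ [r]) / INR x)) with ((INR r * G 0 (l' ++ [r])) / INR x) by (field; auto).
      rewrite IH; field; auto.
    + cbn [app]. change (G (S i) (x :: l' ++ [r])) with ((G (S i) (l' ++ [r]) + G i (x :: l' ++ [r])) / INR x).
      change (G (S i) (x :: l')) with ((G (S i) l' + G i (x :: l')) / INR x).
      simpl Gp. simpl Gp in IHi. cbn [app] in IHi.
      assert (E1 := IH (S i)). simpl Gp in E1.
      assert (E2 := G_cons i x (l' ++ [r]) Hx0).
      apply (Rmult_eq_reg_l (INR x)); auto.
      replace (INR x * (INR r * ((G (S i) (l' ++ [r]) + G i (x :: l' ++ [r])) / INR x)))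
        with (INR r * G (S i) (l' ++ [r]) + INR r * G i (x :: l' ++ [r])) by (field; auto).
      rewrite E1, IHi.
      replace (INR x * ((G (S i) l' + G i (x :: l')) / INR x + G i (x :: l' ++ [r])))
        with (G (S i) l' + G i (x :: l') + INR x * G i (x :: l' ++ [r])) by (field; auto).
      rewrite E2. ring.
Qed.

Lemma posl_seq k m : (0 < k)%nat -> posl (seq k m).
Proof. intros Hk; unfold posl; apply Forall_forall; intros x Hx; apply in_seq in Hx; lia. Qed.

Lemma G_nonneg i l : posl l -> 0 <= G i l.
Proof.
  intros Hl; revert i; induction l as [|x l IH]; intros i.
  - destruct i; simpl; lra.
  - inversion Hl as [|? ? Hx Hl']; subst. specialize (IH Hl').
    assert (0 < INR x) by (apply lt_0_INR; lia).
    induction i.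
    + change (G 0 (x :: l)) with (G 0 l / INR x).
      apply Rmult_le_pos; [apply IH|left; apply Rinv_0_lt_compat; auto].
    + change (G (S i) (x :: l)) with ((G (S i) l + G i (x :: l)) / INR x).
      apply Rmult_le_pos; [|left; apply Rinv_0_lt_compat; auto]. pose proof (IH (S i)); lra.
Qed.

Lemma G_h i m : G i (seq 1 m) = h_sym i m / INR (fact m).
Proof.
  revert i; induction m; intros i.
  - destruct i; simpl; field.
  - assert (Hs : seq 1 (S m) = seq 1 m ++ [S m]) by (rewrite seq_S; reflexivity).
    induction i.
    + pose proof (G_app 0 (seq 1 m) (S m) (posl_seq 1 m ltac:(lia)) ltac:(lia)) as E. rewrite <- Hs in E.
      cbn [Gp] in E. rewrite IHm in E. simpl h_sym in *.
      change (fact (S m)) with (S m * fact m)%nat. rewrite mult_INR.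
      apply (Rmult_eq_reg_l (INR (S m))); [|apply INR_S_neq]. rewrite E. field.
      repeat split; first [apply INR_fact_neq_0|apply INR_S_neq].
    + pose proof (G_app (S i) (seq 1 m) (S m) (posl_seq 1 m ltac:(lia)) ltac:(lia)) as E. rewrite <- Hs in E.
      cbn [Gp] in E. rewrite IHm, IHi in E. rewrite h_sym_S.
      change (fact (S m)) with (S m * fact m)%nat in *. rewrite mult_INR in *.
      apply (Rmult_eq_reg_l (INR (S m))); [|apply INR_S_neq]. rewrite E. field.
      repeat split; first [apply INR_fact_neq_0|apply INR_S_neq].
Qed.

Lemma sumR_telescope f a n : sumR (fun k => f k - f (S k)) a n = f a - f (a + n)%nat.
Proof. induction n. { rewrite sumR_0, Nat.add_0_r; lra. } rewrite sumR_S, IHn. replace (a + S n)%nat with (S (a + n)) by lia. lra. Qed.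

Lemma cv_inv_S : Un_cv (fun K => / INR (S K)) 0.
Proof.
  intros e He. destruct (archimed (/ e)) as [H1 _].
  assert (Hz : (0 <= up (/ e))%Z). { apply le_IZR. pose proof (Rinv_0_lt_compat e He). simpl; lra. }
  exists (Z.to_nat (up (/ e))). intros n Hn. unfold Rdist. rewrite Rminus_0_r.
  pose proof (INR_S_pos n). rewrite Rabs_pos_eq by (left; apply Rinv_0_lt_compat; auto).
  assert (INR (Z.to_nat (up (/ e))) <= INR n) by (apply le_INR; lia).
  rewrite INR_IZR_INZ, Z2Nat.id in H0 by auto.
  rewrite S_INR in *. apply (Rmult_lt_reg_l (INR n + 1)); auto.
  rewrite Rinv_r by lra. apply (Rmult_lt_reg_l (/ e)); [apply Rinv_0_lt_compat; auto|].
  rewrite Rmult_1_r. replace (/ e * ((INR n + 1) * e)) with (INR n + 1) by (field; lra). lra.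
Qed.

Lemma cv_c_inv_S c : Un_cv (fun K => c / INR (S K)) 0.
Proof. replace 0 with (c * 0) by ring. apply cv_scal, cv_inv_S. Qed.

Lemma cv_squeeze0 (v w : nat -> R) : (forall n, 0 <= v n <= w n) -> Un_cv w 0 -> Un_cv v 0.
Proof. intros H Hw. apply (cv_squeeze (fun _ => 0) v w); auto. apply cv_const. Qed.

Lemma G_shift i k m : (0 < k)%nat -> INR m * G i (seq k (S m)) = G i (seq k m) - G i (seq (S k) m).
Proof.
  intros Hk.
  assert (E1 := G_cons i k (seq (S k) m) (INR_pos_neq k Hk)).
  assert (E2 := G_app i (seq k m) (k + m) (posl_seq k m Hk) ltac:(lia)).
  rewrite <- seq_S in E2. change (k :: seq (S k) m) with (seq k (S m)) in E1.
  rewrite plus_INR in E2. lra.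
Qed.

Lemma pow_le_mono x y n : 0 <= x <= y -> x ^ n <= y ^ n.
Proof. intros; apply pow_incr; auto. Qed.

Lemma G_bound i l L : (1 <= L)%nat -> Forall (fun r => (L <= r)%nat) l ->
  G i l <= INR (S i) ^ length l / INR L ^ length l.
Proof.
  intros HL Hl; revert i; induction l as [|x l IH]; intros i.
  - destruct i; simpl; lra.
  - inversion Hl as [|? ? Hx Hl']; subst. specialize (IH Hl').
    assert (HL0 : 1 <= INR L) by (apply (le_INR 1); auto).
    assert (HxL : INR L <= INR x) by (apply le_INR; auto).
    set (n := length l). cbn [length]. fold n in IH.
    assert (HLn : 0 < INR L ^ n) by (apply pow_lt; lra).
    assert (Hpl : posl l) by (unfold posl; eapply Forall_impl; [|apply Hl']; intros; simpl in *; lia).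
    induction i.
    + change (G 0 (x :: l)) with (G 0 l / INR x). specialize (IH 0%nat).
      assert (HG0 : 0 <= G 0 l) by (apply G_nonneg; auto).
      apply Rle_trans with (G 0 l / INR L).
      { unfold Rdiv; apply Rmult_le_compat_l; auto. apply Rinv_le_contravar; lra. }
      change (INR 1) with 1 in *. rewrite pow1 in *. simpl pow. fold n.
      apply (Rmult_le_reg_r (INR L * INR L ^ n)). { apply Rmult_lt_0_compat; lra. }
      replace (G 0 l / INR L * (INR L * INR L ^ n)) with (G 0 l * INR L ^ n) by (field; lra).
      replace (1 / (INR L * INR L ^ n) * (INR L * INR L ^ n)) with 1 by (field; lra).
      apply (Rmult_le_compat_r (INR L ^ n)) in IH; [|lra].
      replace (1 / INR L ^ n * INR L ^ n) with 1 in IH by (field; lra). lra.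
    + change (G (S i) (x :: l)) with ((G (S i) l + G i (x :: l)) / INR x).
      specialize (IH (S i)). cbn [length] in IHi.
      assert (HG : 0 <= G (S i) l + G i (x :: l)).
      { pose proof (G_nonneg (S i) l Hpl); pose proof (G_nonneg i (x :: l) ltac:(constructor; auto; lia)); lra. }
      apply Rle_trans with ((G (S i) l + G i (x :: l)) / INR L).
      { unfold Rdiv; apply Rmult_le_compat_l; auto. apply Rinv_le_contravar; lra. }
      set (a := INR (S (S i))). set (b := INR (S i)).
      assert (Hab : b + 1 = a) by (unfold a, b; rewrite (S_INR (S i)); ring).
      assert (Hb : 1 <= b) by (unfold b; apply (le_INR 1); lia).
      assert (IH' : G (S i) l * INR L ^ n <= a ^ n).
      { unfold a. apply (Rmult_le_reg_r (/ INR L ^ n)). { apply Rinv_0_lt_compat; auto. }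
        rewrite Rmult_assoc, Rinv_r by lra. rewrite Rmult_1_r. exact IH. }
      assert (IHi' : G i (x :: l) * (INR L * INR L ^ n) <= b * b ^ n).
      { apply (Rmult_le_reg_r (/ (INR L * INR L ^ n))). { apply Rinv_0_lt_compat, Rmult_lt_0_compat; lra. }
        rewrite Rmult_assoc, Rinv_r by (apply Rgt_not_eq, Rmult_lt_0_compat; lra). rewrite Rmult_1_r. exact IHi. }
      apply (Rmult_le_reg_r (INR L * (INR L * INR L ^ n))). { apply Rmult_lt_0_compat; [lra|apply Rmult_lt_0_compat; lra]. }
      replace ((G (S i) l + G i (x :: l)) / INR L * (INR L * (INR L * INR L ^ n)))
        with (INR L * (G (S i) l * INR L ^ n) + G i (x :: l) * (INR L * INR L ^ n)) by (field; lra).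
      simpl pow. fold n. replace (a * a ^ n / (INR L * INR L ^ n) * (INR L * (INR L * INR L ^ n)))
        with (INR L * (a * a ^ n)) by (field; lra).
      assert (Hbn : b * b ^ n <= b * a ^ n). { apply Rmult_le_compat_l; [lra|]. apply pow_le_mono; lra. }
      assert (Hbn' : b * a ^ n <= INR L * (b * a ^ n)). { rewrite <- (Rmult_1_l (b * a ^ n)) at 1. apply Rmult_le_compat_r; [|lra].
        apply Rmult_le_pos; [lra|apply pow_le; lra]. }
      assert (INR L * (G (S i) l * INR L ^ n) <= INR L * a ^ n) by (apply Rmult_le_compat_l; lra).
      assert (INR L * (a * a ^ n) = INR L * a ^ n + INR L * (b * a ^ n)) by (rewrite <- Hab; ring). lra.
Qed.

Lemma Forall_seq_ge k m : Forall (fun r => (k <= r)%nat) (seq k m).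
Proof. apply Forall_forall; intros x Hx; apply in_seq in Hx; lia. Qed.

Lemma G_tail0 i m : (1 <= m)%nat -> Un_cv (fun K => G i (seq (S K) m)) 0.
Proof.
  intros Hm. apply cv_squeeze0 with (w := fun K => INR (S i) ^ m / INR (S K)).
  - intros K; split. { apply G_nonneg, posl_seq; lia. }
    eapply Rle_trans. { apply (G_bound i _ (S K)); [lia|apply Forall_seq_ge]. }
    rewrite length_seq. unfold Rdiv; apply Rmult_le_compat_l. { apply pow_le, pos_INR. }
    apply Rinv_le_contravar. apply INR_S_pos.
    rewrite <- (pow_1 (INR (S K))) at 1. apply Rle_pow; [apply (le_INR 1); lia|lia].
  - apply cv_c_inv_S.
Qed.

Lemma row_sum i m : (1 <= m)%nat ->
  Un_cv (fun K => sumR (fun k => G i (seq k (S m))) 1 K) (G i (seq 1 m) / INR m).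
Proof.
  intros Hm. assert (Hm0 : INR m <> 0) by (apply not_0_INR; lia).
  apply cv_ext with (u := fun K => (G i (seq 1 m) - G i (seq (S K) m)) / INR m).
  - intros K. rewrite (sumR_ext _ (fun k => / INR m * (G i (seq k m) - G i (seq (S k) m)))).
    + rewrite sumR_scal, sumR_telescope. replace (1 + K)%nat with (S K) by lia. field; auto.
    + intros k Hk. rewrite <- G_shift by lia. field; auto.
  - replace (G i (seq 1 m) / INR m) with ((G i (seq 1 m) - 0) / INR m) by (f_equal; ring).
    unfold Rdiv. apply CV_mult; [apply CV_minus; [apply cv_const|apply G_tail0; auto]|apply cv_const].
Qed.

Definition Hn (m : nat) : R := e_sym 1 m.

Lemma Hn_S m : Hn (S m) = Hn m + / INR (S m).
Proof. unfold Hn; rewrite e_sym_S; simpl e_sym; ring. Qed.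
Lemma Hn_0 : Hn 0 = 0.
Proof. reflexivity. Qed.
Lemma Hn_nonneg m : 0 <= Hn m.
Proof. apply e_sym_nonneg. Qed.
Lemma Hn_mono m : Hn m <= Hn (S m).
Proof. rewrite Hn_S. pose proof (Rinv_0_lt_compat _ (INR_S_pos m)); lra. Qed.

Lemma pow_add_ge a b n : 0 <= a -> 0 <= b -> a ^ S n + a ^ n * b <= (a + b) ^ S n.
Proof. intros Ha Hb. simpl. assert (a ^ n <= (a + b) ^ n) by (apply pow_le_mono; lra).
  pose proof (pow_le a n Ha). nra. Qed.

Lemma e_sym_le_H j m : e_sym j m <= Hn m ^ j.
Proof.
  revert j; induction m; intros j.
  - destruct j; simpl; [lra|]. rewrite Rmult_0_l. lra.
  - destruct j; [simpl; lra|]. rewrite e_sym_S, Hn_S.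
    pose proof (Rinv_0_lt_compat _ (INR_S_pos m)).
    eapply Rle_trans; [|apply pow_add_ge; [apply Hn_nonneg|lra]].
    specialize (IHm (S j)) as I1; specialize (IHm j) as I2.
    pose proof (e_sym_nonneg j m). nra.
Qed.

Lemma h_sym_le_H i m : h_sym i m <= Hn m ^ i.
Proof.
  revert i; induction m; intros i.
  - destruct i; simpl; [lra|]. rewrite Rmult_0_l. lra.
  - induction i; [simpl; lra|]. rewrite h_sym_S.
    pose proof (Rinv_0_lt_compat _ (INR_S_pos m)).
    specialize (IHm (S i)) as I1.
    assert (Hmono : Hn m ^ i <= Hn (S m) ^ i) by (apply pow_le_mono; split; [apply Hn_nonneg|apply Hn_mono]).
    pose proof (Hn_nonneg m). pose proof (h_sym_nonneg i (S m)). pose proof (pow_le (Hn m) i (Hn_nonneg m)).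
    simpl pow in *. rewrite (Hn_S m) at 1. nra.
Qed.

Lemma Rdiv_le_0_compat a b : 0 <= a -> 0 < b -> 0 <= a / b.
Proof. intros; unfold Rdiv; apply Rmult_le_pos; [auto|left; apply Rinv_0_lt_compat; auto]. Qed.

Lemma ln_le x y : 0 < x -> x <= y -> ln x <= ln y.
Proof. intros Hx [Hl| ->]; [left; apply ln_increasing; auto|lra]. Qed.

Lemma ln_bound_step m : (1 <= m)%nat -> / INR (S m) <= ln (INR (S m)) - ln (INR m).
Proof.
  intros Hm. assert (Hm0 : 0 < INR m) by (apply lt_0_INR; lia). pose proof (INR_S_pos m).
  assert (E : 1 + - / INR (S m) <= exp (- / INR (S m))) by apply exp_ineq1_le.
  assert (E2 : INR m / INR (S m) = 1 + - / INR (S m)) by (rewrite S_INR; field; lra).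
  rewrite <- E2 in E. apply ln_le in E; [|apply Rdiv_lt_0_compat; lra].
  rewrite ln_exp in E. unfold Rdiv in E. rewrite ln_mult, ln_Rinv in E; try lra.
  apply Rinv_0_lt_compat; lra.
Qed.

Lemma Hn_le_ln m : (1 <= m)%nat -> Hn m <= 1 + ln (INR m).
Proof.
  intros Hm. induction m; [lia|]. destruct m.
  - unfold Hn. simpl. rewrite ln_1. unfold Rsum_list; simpl. lra.
  - rewrite Hn_S. pose proof (ln_bound_step (S m) ltac:(lia)). specialize (IHm ltac:(lia)). lra.
Qed.

Lemma ln_nonneg m : (1 <= m)%nat -> 0 <= ln (INR m).
Proof. intros; rewrite <- ln_1; apply ln_le; [lra|apply (le_INR 1); auto]. Qed.

Lemma sq_to_cv (z : nat -> R) K : (forall n, 0 <= z n) -> (forall n, z n ^ 2 <= K / INR (S n)) -> Un_cv z 0.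
Proof.
  intros Hz Hb e He. destruct (cv_c_inv_S K (e * e) ltac:(nra)) as [N HN].
  exists N; intros n Hn. specialize (HN n Hn). unfold Rdist in *. rewrite Rminus_0_r in *.
  specialize (Hb n); specialize (Hz n). rewrite Rabs_pos_eq by auto.
  apply Rabs_def2 in HN. cbn [pow] in Hb. destruct (Rlt_or_le (z n) e); auto. nra.
Qed.

Lemma exp_pow x n : exp x ^ n = exp (INR n * x).
Proof. induction n; simpl. { rewrite Rmult_0_l, exp_0; auto. } rewrite IHn, <- exp_plus. f_equal.
  destruct n; simpl; ring. Qed.

Lemma lnpow_over_n c : Un_cv (fun n => (1 + ln (INR (S n))) ^ c / INR (S n)) 0.
Proof.
  set (d := INR (2 * (S c))).
  assert (Hd : 1 <= d) by (unfold d; apply (le_INR 1); lia).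
  apply sq_to_cv with (K := (d ^ (S c)) ^ 2).
  - intros n. pose proof (ln_nonneg (S n) ltac:(lia)). apply Rdiv_le_0_compat; [apply pow_le; lra|apply INR_S_pos].
  - intros n. set (L := ln (INR (S n))). assert (HL : 0 <= L) by (apply ln_nonneg; lia).
    set (N := INR (S n)). assert (HN : 0 < N) by apply INR_S_pos.
    set (y := (1 + L / d) ^ S c).
    assert (Hy1 : 1 <= y) by (apply pow_R1_Rle; apply Rle_trans with (1 + 0); [lra|];
                               apply Rplus_le_compat_l; apply Rdiv_le_0_compat; lra).
    assert (Hy2 : y ^ 2 <= N).
    { unfold y. rewrite <- pow_mult. replace (S c * 2)%nat with (2 * S c)%nat by lia.
      eapply Rle_trans. { apply pow_le_mono. split; [apply Rle_trans with 1; [lra|]; apply Rle_trans with (1+0); [lra|];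
          apply Rplus_le_compat_l; apply Rdiv_le_0_compat; lra|]. apply exp_ineq1_le. }
      rewrite exp_pow. fold d. replace (d * (L / d)) with L by (field; lra). unfold L. rewrite exp_ln; [unfold N; lra|apply INR_S_pos]. }
    assert (Hc : (1 + L) ^ c <= d ^ S c * y).
    { unfold y. rewrite <- Rpow_mult_distr. apply Rle_trans with ((1 + L) ^ S c).
      - simpl. rewrite <- (Rmult_1_l ((1+L)^c)) at 1. apply Rmult_le_compat_r; [apply pow_le|]; lra.
      - apply pow_le_mono. split; [lra|]. replace (d * (1 + L / d)) with (d + L) by (field; lra). lra. }
    assert (H0 : 0 <= (1 + L) ^ c) by (apply pow_le; lra).
    assert (Hdp : 0 < d ^ S c) by (apply pow_lt; lra).
    apply Rle_trans with ((d ^ S c * y / N) ^ 2).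
    + apply pow_le_mono. split; [apply Rdiv_le_0_compat; lra|]. unfold Rdiv; apply Rmult_le_compat_r; [left; apply Rinv_0_lt_compat; lra|lra].
    + replace ((d ^ S c * y / N) ^ 2) with ((d ^ S c) ^ 2 * (y ^ 2 / N) / N) by (field; lra).
      unfold Rdiv. apply Rmult_le_compat_r; [left; apply Rinv_0_lt_compat; lra|].
      rewrite <- (Rmult_1_r ((d ^ S c) ^ 2)) at 2. apply Rmult_le_compat_l; [apply pow_le; lra|].
      apply (Rmult_le_reg_r N); auto. rewrite Rmult_assoc, Rinv_l by lra. lra.
Qed.

Lemma Hpow_over_n c : Un_cv (fun n => Hn (S n) ^ c / INR (S n)) 0.
Proof.
  apply cv_squeeze0 with (w := fun n => (1 + ln (INR (S n))) ^ c / INR (S n)); [|apply lnpow_over_n].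
  intros n. pose proof (INR_S_pos n). split.
  - apply Rdiv_le_0_compat; [apply pow_le, Hn_nonneg|auto].
  - unfold Rdiv; apply Rmult_le_compat_r; [left; apply Rinv_0_lt_compat; auto|].
    apply pow_le_mono; split; [apply Hn_nonneg|apply Hn_le_ln; lia].
Qed.

Fixpoint binomR (n k : nat) : R :=
  match n, k with
  | _, O => 1
  | O, S _ => 0
  | S n', S k' => binomR n' k' + binomR n' (S k')
  end.

Lemma binomR_0 n : binomR n 0 = 1.
Proof. destruct n; reflexivity. Qed.
Lemma binomR_gt n k : (n < k)%nat -> binomR n k = 0.
Proof. revert k; induction n; intros k Hk; destruct k; try lia; simpl; auto.
  rewrite !IHn by lia; ring. Qed.
Lemma binomR_nn n : binomR n n = 1.
Proof. induction n; simpl; auto. rewrite IHn, binomR_gt by lia; ring. Qed.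
Lemma binomR_nonneg n k : 0 <= binomR n k.
Proof. revert k; induction n; intros k; destruct k; simpl; try lra. pose proof (IHn k); pose proof (IHn (S k)); lra. Qed.

Lemma G_shift_le i k m : (0 < k)%nat -> G i (seq (S k) m) <= G i (seq k m).
Proof. intros Hk. pose proof (G_shift i k m Hk). pose proof (G_nonneg i (seq k (S m)) (posl_seq k (S m) Hk)).
  pose proof (pos_INR m). nra. Qed.

Lemma G_shift_le2 i k m : (1 <= k)%nat -> G i (seq (S k) m) <= G i (seq 1 (S m)).
Proof.
  intros Hk. apply Rle_trans with (G i (seq 2 m)).
  - induction k; [lia|]. destruct k; [lra|]. eapply Rle_trans; [apply G_shift_le; lia|]. apply IHk; lia.
  - pose proof (G_cons i 1 (seq 2 m) ltac:(simpl; lra)). change (1%nat :: seq 2 m) with (seq 1 (S m)) in H.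
    simpl INR in H. rewrite Rmult_1_l in H. rewrite H.
    assert (0 <= Gp i (seq 1 (S m))) by (destruct i; cbn [Gp]; [lra|apply G_nonneg, posl_seq; lia]). lra.
Qed.

Lemma sumR_mul0r f a n : sumR (fun m => f m * 0) a n = 0.
Proof. rewrite (sumR_ext _ (fun _ => 0)) by (intros; ring). apply sumR_zero. Qed.
Lemma sumR_mul0l f a n : sumR (fun m => 0 * f m) a n = 0.
Proof. rewrite (sumR_ext _ (fun _ => 0)) by (intros; ring). apply sumR_zero. Qed.

Definition Dt k j i m := Aco j m * G i (seq (S k) m).

Lemma Dt_bound k j i m : (1 <= k)%nat -> 0 <= Dt k j i m <= Hn (S m) ^ (i + j) / INR (S m).
Proof.
  intros Hk. unfold Dt. split. { apply Rmult_le_pos; [apply Aco_nonneg|apply G_nonneg, posl_seq; lia]. }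
  apply Rle_trans with (Aco j m * G i (seq 1 (S m))).
  { apply Rmult_le_compat_l; [apply Aco_nonneg|apply G_shift_le2; auto]. }
  rewrite Aco_e, G_h. change (fact (S m)) with (S m * fact m)%nat. rewrite mult_INR.
  pose proof (INR_fact_lt_0 m). pose proof (INR_S_pos m).
  replace (INR (fact m) * e_sym j m * (h_sym i (S m) / (INR (S m) * INR (fact m))))
    with (e_sym j m * h_sym i (S m) / INR (S m)) by (field; lra).
  unfold Rdiv; apply Rmult_le_compat_r; [left; apply Rinv_0_lt_compat; auto|].
  rewrite Nat.add_comm, pow_add. apply Rmult_le_compat.
  - apply e_sym_nonneg.
  - apply h_sym_nonneg.
  - eapply Rle_trans; [apply e_sym_le_H|]. apply pow_le_mono; split; [apply Hn_nonneg|apply Hn_mono].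
  - apply h_sym_le_H.
Qed.

Lemma Dt_cv k j i : (1 <= k)%nat -> Un_cv (Dt k j i) 0.
Proof. intros Hk. apply cv_squeeze0 with (w := fun m => Hn (S m) ^ (i + j) / INR (S m)).
  - intros; apply Dt_bound; auto.
  - apply Hpow_over_n. Qed.

Definition SX k j i M := sumR (fun m => Aco j (m - 1) * G i (seq k (S m))) 1 M.
Definition SW k j i M := sumR (fun m => Aco j (m - 1) * G i (seq (S k) m)) 1 M.

Lemma alpha_pt k j i m : (1 <= k)%nat ->
  INR k * (Aco j (m - 1) * G i (seq k (S m))) =
  Aco j (m - 1) * G i (seq (S k) m) + Aco j (m - 1) * Gp i (seq k (S m)).
Proof. intros Hk. pose proof (G_cons i k (seq (S k) m) (INR_pos_neq k ltac:(lia))) as E.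
  change (k :: seq (S k) m) with (seq k (S m)) in E. rewrite <- Rmult_plus_distr_l, <- E. ring. Qed.

Lemma beta_pt k j i m : (1 <= k)%nat -> (1 <= m)%nat ->
  INR k * (Aco j (m - 1) * G i (seq (S k) m)) =
  Dt k j i (m - 1) - Dt k j i m + Aco j (m - 1) * Gp i (seq (S k) m)
  + (match j with O => 0 | S j' => Aco j' (m - 1) end) * G i (seq (S k) m).
Proof.
  intros Hk Hm. destruct m as [|m]; [lia|]. replace (S m - 1)%nat with m by lia. unfold Dt.
  pose proof (G_app i (seq (S k) m) (S k + m) (posl_seq (S k) m ltac:(lia)) ltac:(lia)) as E.
  rewrite <- seq_S in E. rewrite plus_INR in E.
  assert (EA : Aco j (S m) = INR (S m) * Aco j m + match j with O => 0 | S j' => Aco j' m end) by reflexivity.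
  rewrite EA. rewrite S_INR in *.
  assert (E' : G i (seq (S k) m) = (INR k + (INR m + 1)) * G i (seq (S k) (S m)) - Gp i (seq (S k) (S m))) by lra.
  rewrite E'. ring.
Qed.

Lemma SX_rec k j i M : (1 <= k)%nat ->
  INR k * SX k j i M = SW k j i M + match i with O => 0 | S i' => SX k j i' M end.
Proof.
  intros Hk. unfold SX, SW. rewrite <- sumR_scal.
  rewrite (sumR_ext _ (fun m => Aco j (m - 1) * G i (seq (S k) m) + Aco j (m - 1) * Gp i (seq k (S m)))).
  2:{ intros; apply alpha_pt; auto. }
  rewrite sumR_plus. destruct i; cbn [Gp].
  - rewrite (sumR_ext (fun m => Aco j (m - 1) * 0) (fun _ => 0)) by (intros; ring). rewrite sumR_zero; ring.
  - reflexivity.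
Qed.

Lemma SW_rec k j i M : (1 <= k)%nat ->
  INR k * SW k j i M = Dt k j i 0 - Dt k j i M + match i with O => 0 | S i' => SW k j i' M end
                       + match j with O => 0 | S j' => SW k j' i M end.
Proof.
  intros Hk. unfold SW. rewrite <- sumR_scal.
  rewrite (sumR_ext _ (fun m => (Dt k j i (m - 1) - Dt k j i (S m - 1)) + (Aco j (m - 1) * Gp i (seq (S k) m)
     + (match j with O => 0 | S j' => Aco j' (m - 1) end) * G i (seq (S k) m)))).
  2:{ intros m Hm. rewrite beta_pt by lia. replace (S m - 1)%nat with m by lia. ring. }
  rewrite sumR_plus, sumR_plus.
  rewrite (sumR_telescope (fun m => Dt k j i (m - 1))). simpl (1 - 1)%nat. replace (1 + M - 1)%nat with M by lia.
  destruct i; destruct j; cbn [Gp]; rewrite ?sumR_mul0r, ?sumR_mul0l; ring.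
Qed.

Definition wv k j i := binomR (i + j) j / INR k ^ (i + j + 1).
Definition xv k j i := binomR (i + j + 1) (j + 1) / INR k ^ (i + j + 2).

Lemma col_W k j i : (1 <= k)%nat -> Un_cv (SW k j i) (wv k j i).
Proof.
  intros Hk. assert (Hk0 : 0 < INR k) by (apply lt_0_INR; lia).
  revert i; induction j; intros i; induction i.
  - apply cv_ext with (u := fun M => / INR k * (Dt k 0 0 0 - Dt k 0 0 M)).
    { intros M. pose proof (SW_rec k 0 0 M Hk). apply (Rmult_eq_reg_l (INR k)); [|lra]. rewrite H. field; lra. }
    replace (wv k 0 0) with (/ INR k * (Dt k 0 0 0 - 0)).
    + apply cv_scal, CV_minus; [apply cv_const|apply Dt_cv; auto].
    + unfold wv, Dt. simpl. field. lra.
  - apply cv_ext with (u := fun M => / INR k * (Dt k 0 (S i) 0 - Dt k 0 (S i) M + SW k 0 i M)).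
    { intros M. pose proof (SW_rec k 0 (S i) M Hk). apply (Rmult_eq_reg_l (INR k)); [|lra]. rewrite H. field; lra. }
    replace (wv k 0 (S i)) with (/ INR k * (Dt k 0 (S i) 0 - 0 + wv k 0 i)).
    + apply cv_scal, CV_plus; auto. apply CV_minus; [apply cv_const|apply Dt_cv; auto].
    + unfold wv, Dt. simpl G. rewrite !binomR_0, !Nat.add_0_r. replace (S i + 1)%nat with (S (i + 1)) by lia.
      simpl pow. field; repeat split; first [apply pow_nonzero; lra | lra].
  - apply cv_ext with (u := fun M => / INR k * (Dt k (S j) 0 0 - Dt k (S j) 0 M + SW k j 0 M)).
    { intros M. pose proof (SW_rec k (S j) 0 M Hk). apply (Rmult_eq_reg_l (INR k)); [|lra]. rewrite H. field; lra. }
    replace (wv k (S j) 0) with (/ INR k * (Dt k (S j) 0 0 - 0 + wv k j 0)).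
    + apply cv_scal, CV_plus; [|apply IHj]. apply CV_minus; [apply cv_const|apply Dt_cv; auto].
    + unfold wv, Dt. simpl Aco. simpl (0 + _)%nat. rewrite !binomR_nn. replace (S j + 1)%nat with (S (j + 1)) by lia.
      simpl pow. field; repeat split; first [apply pow_nonzero; lra | lra].
  - apply cv_ext with (u := fun M => / INR k * (Dt k (S j) (S i) 0 - Dt k (S j) (S i) M + SW k (S j) i M + SW k j (S i) M)).
    { intros M. pose proof (SW_rec k (S j) (S i) M Hk). apply (Rmult_eq_reg_l (INR k)); [|lra]. rewrite H. field; lra. }
    replace (wv k (S j) (S i)) with (/ INR k * (Dt k (S j) (S i) 0 - 0 + wv k (S j) i + wv k j (S i))).
    + apply cv_scal, CV_plus; [apply CV_plus|apply IHj]; auto. apply CV_minus; [apply cv_const|apply Dt_cv; auto].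
    + unfold wv, Dt. simpl Aco. rewrite Rmult_0_l.
      replace (S i + S j)%nat with (S (i + S j)) by lia. replace (S i + j)%nat with (i + S j)%nat by lia.
      simpl binomR. replace (S (i + S j) + 1)%nat with (S (i + S j + 1)) by lia. simpl pow.
      field; repeat split; first [apply pow_nonzero; lra | lra].
Qed.

Lemma col_X k j i : (1 <= k)%nat -> Un_cv (SX k j i) (xv k j i).
Proof.
  intros Hk. assert (Hk0 : 0 < INR k) by (apply lt_0_INR; lia).
  induction i.
  - apply cv_ext with (u := fun M => / INR k * SW k j 0 M).
    { intros M. pose proof (SX_rec k j 0 M Hk). apply (Rmult_eq_reg_l (INR k)); [|lra]. rewrite H. field; lra. }
    replace (xv k j 0) with (/ INR k * wv k j 0).
    + apply cv_scal, col_W; auto.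
    + unfold xv, wv. simpl (0 + _)%nat. rewrite binomR_nn. replace (j + 1)%nat with (S j) by lia. rewrite binomR_nn.
      replace (j + 2)%nat with (S (S j)) by lia. simpl pow. field; repeat split; first [apply pow_nonzero; lra | lra].
  - apply cv_ext with (u := fun M => / INR k * (SW k j (S i) M + SX k j i M)).
    { intros M. pose proof (SX_rec k j (S i) M Hk). apply (Rmult_eq_reg_l (INR k)); [|lra]. rewrite H. field; lra. }
    replace (xv k j (S i)) with (/ INR k * (wv k j (S i) + xv k j i)).
    + apply cv_scal, CV_plus; auto. apply col_W; auto.
    + assert (B : binomR (S i + j + 1) (j + 1) = binomR (S i + j) j + binomR (i + j + 1) (j + 1)).
      { replace (S i + j + 1)%nat with (S (S i + j)) by lia. replace (j + 1)%nat with (S j) by lia.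
        replace (i + j + 1)%nat with (S i + j)%nat by lia. reflexivity. }
      assert (P1 : INR k ^ (S i + j + 2) = INR k * INR k ^ (S i + j + 1)).
      { replace (S i + j + 2)%nat with (S (S i + j + 1)) by lia. reflexivity. }
      assert (P2 : INR k ^ (i + j + 2) = INR k ^ (S i + j + 1)) by (f_equal; lia).
      unfold xv, wv. rewrite B, P1, P2. field; repeat split; first [apply pow_nonzero; lra | lra].
Qed.

Lemma psum_le_lim (u : nat -> R) a L N : (forall n, 0 <= u n) ->
  Un_cv (fun M => sumR u a M) L -> sumR u a N <= L.
Proof.
  intros Hu Hc. apply cv_ge_const with (u := fun n => sumR u a (N + n)).
  - intros n. rewrite sumR_split. pose proof (sumR_nonneg u (a + N) n Hu). lra.
  - intros e He. destruct (Hc e He) as [N0 HN]. exists N0. intros n Hn. apply HN. lia.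
Qed.

Lemma fubini (f : nat -> nat -> R) (g h : nat -> R) S :
  (forall m k, 0 <= f m k) ->
  (forall m, Un_cv (fun K => sumR (f m) 1 K) (g m)) ->
  (forall k, Un_cv (fun M => sumR (fun m => f m k) 1 M) (h k)) ->
  Un_cv (fun K => sumR h 1 K) S ->
  Un_cv (fun M => sumR g 1 M) S.
Proof.
  intros Hf Hg Hh HS.
  assert (Hg0 : forall m, 0 <= g m).
  { intros m. apply (cv_ge_const _ _ 0 (fun K => sumR_nonneg _ 1 K (Hf m)) (Hg m)). }
  assert (Hh0 : forall k, 0 <= h k).
  { intros k. apply (cv_ge_const _ _ 0 (fun M => sumR_nonneg _ 1 M (fun m => Hf m k)) (Hh k)). }
  assert (B1 : forall M, sumR g 1 M <= S).
  { intros M. apply (cv_le_const (fun K => sumR (fun m => sumR (f m) 1 K) 1 M)).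
    - intros K. rewrite sumR_swap. apply Rle_trans with (sumR h 1 K).
      + apply sumR_le. intros k. apply psum_le_lim; auto.
      + apply psum_le_lim; auto.
    - apply cv_sumR; auto. }
  destruct (cv_growing_bounded (fun M => sumR g 1 M) S) as [l [Hl HlS]]; auto.
  { intros n. rewrite sumR_S. pose proof (Hg0 (1 + n)%nat); lra. }
  replace S with l; auto.
  apply Rle_antisym; auto.
  apply (cv_le_const (fun K => sumR h 1 K)); auto.
  intros K. apply (cv_le_const (fun M => sumR (fun k => sumR (fun m => f m k) 1 M) 1 K)).
  - intros M. rewrite <- sumR_swap. apply Rle_trans with (sumR g 1 M).
    + apply sumR_le. intros m. apply psum_le_lim; auto.
    + apply psum_le_lim; auto.
  - apply cv_sumR; auto.
Qed.

Lemma mzv_eq a l : Un_cv (mzv_partial a) l -> mzv a = l.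
Proof.
  intros H. unfold mzv. assert (E : exists x, Un_cv (mzv_partial a) x) by eauto.
  pose proof (epsilon_spec (inhabits 0) _ E). eapply cv_unique; eauto.
Qed.

Lemma mzv1_partial w N : mzv_partial [w] N = sumR (fun k => / INR k ^ w) 1 N.
Proof. change (sumR (fun n1 => / (INR n1 ^ w) * 1) 1 N = sumR (fun k => / INR k ^ w) 1 N).
  apply sumR_ext; intros; ring. Qed.

Lemma inv_sq_bound0 N : sumR (fun k => / INR k ^ 2) 1 (S N) <= 2 - / INR (S N).
Proof.
  induction N. { unfold sumR; simpl; unfold Rsum_list; simpl. lra. }
  rewrite sumR_S. replace (1 + S N)%nat with (S (S N)) by lia.
  assert (/ INR (S (S N)) ^ 2 <= / INR (S N) - / INR (S (S N))).
  { rewrite (S_INR (S N)). set (x := INR (S N)). assert (0 < x) by (unfold x; apply INR_S_pos).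
    simpl pow. replace (/ x - / (x + 1)) with (/ (x * (x + 1))) by (field; lra).
    apply Rinv_le_contravar; [apply Rmult_lt_0_compat; lra|]. nra. }
  lra.
Qed.

Lemma inv_sq_bound N : sumR (fun k => / INR k ^ 2) 1 N <= 2.
Proof.
  eapply Rle_trans; [|apply Rle_trans with (2 - / INR (S N)); [apply inv_sq_bound0|]].
  - rewrite sumR_S. simpl (1 + N)%nat. pose proof (pow_lt _ 2 (INR_S_pos N)).
    pose proof (Rinv_0_lt_compat _ H). lra.
  - pose proof (Rinv_0_lt_compat _ (INR_S_pos N)); lra.
Qed.

Lemma zeta_cv w : (2 <= w)%nat -> exists z, Un_cv (mzv_partial [w]) z.
Proof.
  intros Hw. destruct (cv_growing_bounded (fun N => sumR (fun k => / INR k ^ w) 1 N) 2) as [z [Hz _]].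
  - intros n. rewrite sumR_S. simpl (1 + n)%nat. pose proof (pow_lt _ w (INR_S_pos n)).
    pose proof (Rinv_0_lt_compat _ H). lra.
  - intros N. eapply Rle_trans; [|apply (inv_sq_bound N)].
    + apply sumR_le. intros k. destruct k. { change (INR 0) with 0. rewrite !pow_i by lia. lra. }
      apply Rinv_le_contravar. { apply pow_lt, INR_S_pos. }
      apply Rle_pow; [apply (le_INR 1); lia|auto].
  - exists z. eapply cv_ext; [|apply Hz]. intros; symmetry; apply mzv1_partial.
Qed.

Lemma theorem_I i j :
  Un_cv (fun M => sumR (fun m => e_sym j (m - 1) * h_sym i m / INR m ^ 2) 1 M)
        (binomR (i + j + 1) (j + 1) * mzv [(i + j + 2)%nat]).
Proof.
  destruct (zeta_cv (i + j + 2) ltac:(lia)) as [z Hz]. rewrite (mzv_eq _ _ Hz).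
  set (f := fun m k => match m, k with O, _ => 0 | _, O => 0 | S m', S k' => Aco j m' * G i (seq (S k') (S (S m'))) end).
  set (g := fun m => match m with O => 0 | S m' => e_sym j m' * h_sym i (S m') / INR (S m') ^ 2 end).
  set (h := fun k => match k with O => 0 | S k' => xv (S k') j i end).
  apply cv_ext with (u := fun M => sumR g 1 M).
  { intros M. apply sumR_ext. intros m Hm. destruct m; [lia|]. unfold g. f_equal. f_equal. f_equal. lia. }
  apply fubini with (f := f) (h := h).
  - intros m k. unfold f. destruct m; [lra|]. destruct k; [lra|].
    apply Rmult_le_pos; [apply Aco_nonneg|apply G_nonneg, posl_seq; lia].
  - intros m. destruct m.
    + unfold f, g. eapply cv_ext; [|apply cv_const]. intros K; symmetry; apply sumR_zero.
    + assert (Hr := row_sum i (S m) ltac:(lia)).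
      apply cv_ext with (u := fun K => Aco j m * sumR (fun k => G i (seq k (S (S m)))) 1 K).
      { intros K. rewrite <- sumR_scal. apply sumR_ext. intros k Hk. unfold f. destruct k; [lia|]. reflexivity. }
      replace (g (S m)) with (Aco j m * (G i (seq 1 (S m)) / INR (S m))).
      { apply cv_scal; auto. }
      unfold g. rewrite Aco_e, G_h. change (fact (S m)) with (S m * fact m)%nat. rewrite mult_INR.
      pose proof (INR_fact_lt_0 m). pose proof (INR_S_pos m). field. lra.
  - intros k. destruct k.
    + unfold f, h. eapply cv_ext; [|apply cv_const]. intros M; symmetry.
      rewrite (sumR_ext _ (fun _ => 0)); [apply sumR_zero|]. intros m _; destruct m; reflexivity.
    + unfold h. eapply cv_ext; [|apply (col_X (S k) j i); lia]. intros M. unfold SX. apply sumR_ext.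
      intros m Hm. unfold f. destruct m; [lia|]. replace (S m - 1)%nat with m by lia. reflexivity.
  - apply cv_ext with (u := fun K => binomR (i + j + 1) (j + 1) * mzv_partial [(i + j + 2)%nat] K).
    + intros K. rewrite mzv1_partial, <- sumR_scal. apply sumR_ext. intros k Hk. unfold h, xv. destruct k; [lia|].
      unfold Rdiv; ring.
    + apply cv_scal; auto.
Qed.

Definition CS q W N := Rsum_list (map (fun b => mzv_partial b N) (compositions q W)).

Lemma comp_S q W : compositions (S q) W = flat_map (fun a => map (cons a) (compositions q (W - a))) (seq 1 W).
Proof. reflexivity. Qed.

Lemma comp_empty q W : (W < q)%nat -> compositions q W = [].
Proof.
  revert W; induction q; intros W H; [lia|]. rewrite comp_S.
  assert (forall l, (forall a, In a l -> (1 <= a <= W)%nat) -> flat_map (fun a => map (cons a) (compositions q (W - a))) l = []).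
  { induction l as [|b l IHl]; intros Hl; simpl; auto.
    assert (Hb : (1 <= b <= W)%nat) by (apply Hl; simpl; auto).
    rewrite IHq by lia. simpl. apply IHl.
    intros; apply Hl; simpl; auto. }
  apply H0. intros a Ha; apply in_seq in Ha; lia.
Qed.

Lemma CS_gt q W N : (W < q)%nat -> CS q W N = 0.
Proof. intros; unfold CS; rewrite comp_empty; auto. Qed.

Lemma CS_00 N : CS 0 0 N = 1.
Proof. unfold CS; simpl. unfold Rsum_list; simpl; ring. Qed.
Lemma CS_0S W N : CS 0 (S W) N = 0.
Proof. reflexivity. Qed.

Lemma sumR_as_list f a n : Rsum_list (map f (seq a n)) = sumR f a n.
Proof. reflexivity. Qed.

Lemma CS_rec q W N : CS (S q) W (S N) = CS (S q) W N + sumR (fun a => / (INR (S N) ^ a) * CS q (W - a) N) 1 W.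
Proof.
  unfold CS. rewrite comp_S, !Rsum_list_flat_map. rewrite sumR_as_list, sumR_as_list, <- sumR_plus.
  apply sumR_ext. intros a _. rewrite !map_map.
  rewrite (Rsum_list_map_ext _ _ (fun x => mzv_partial (a :: x) N + / INR (S N) ^ a * mzv_partial x N)).
  2:{ intros; apply mz_S. }
  rewrite Rsum_list_map_plus, Rsum_list_map_scal. reflexivity.
Qed.

Lemma Rsum_list_zero {A} (l : list A) : Rsum_list (map (fun _ => 0) l) = 0.
Proof. induction l; cbn [map]; auto. rewrite Rsum_list_cons, IHl; ring. Qed.

Lemma CS_S0 q W : CS (S q) W 0 = 0.
Proof. unfold CS. rewrite comp_S, Rsum_list_flat_map.
  rewrite (Rsum_list_map_ext _ _ (fun _ => 0)); [apply Rsum_list_zero|].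
  intros a _. rewrite map_map. rewrite (Rsum_list_map_ext _ _ (fun _ => 0)); [apply Rsum_list_zero|].
  intros; apply mz_0. Qed.

Definition P J W Q N := sumR (fun q => binomR q J * CS q W N) 0 Q.

Lemma sumR_shift f a n : sumR f (S a) n = sumR (fun k => f (S k)) a n.
Proof. revert a; induction n; intros; [reflexivity|]. rewrite !sumR_Sl, IHn; reflexivity. Qed.

Lemma P_zero J W Q N : (W < J)%nat -> P J W Q N = 0.
Proof. intros H. unfold P. rewrite (sumR_ext _ (fun _ => 0)); [apply sumR_zero|]. intros q _.
  destruct (le_lt_dec q W). { rewrite binomR_gt by lia; ring. } rewrite CS_gt by lia; ring. Qed.

Lemma P_rec J W Q N : P J W (S Q) (S N) = P J W (S Q) N +
  sumR (fun a => / (INR (S N) ^ a) * (P J (W - a) Q N + match J with O => 0 | S J' => P J' (W - a) Q N end)) 1 W.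
Proof.
  unfold P. rewrite !(sumR_Sl _ 0 Q), !(sumR_shift _ 0 Q).
  assert (E0 : CS 0 W (S N) = CS 0 W N) by (destruct W; [rewrite !CS_00|rewrite !CS_0S]; auto).
  rewrite E0. rewrite (sumR_ext (fun k => binomR (S k) J * CS (S k) W (S N))
     (fun k => binomR (S k) J * CS (S k) W N + sumR (fun a => binomR (S k) J * (/ INR (S N) ^ a * CS k (W - a) N)) 1 W)).
  2:{ intros; rewrite CS_rec, Rmult_plus_distr_l, sumR_scal; auto. }
  rewrite sumR_plus, sumR_swap.
  assert (E : sumR (fun y => sumR (fun x => binomR (S x) J * (/ INR (S N) ^ y * CS x (W - y) N)) 0 Q) 1 W
     = sumR (fun a => / INR (S N) ^ a * (sumR (fun q => binomR q J * CS q (W - a) N) 0 Q +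
         match J with O => 0 | S J' => sumR (fun q => binomR q J' * CS q (W - a) N) 0 Q end)) 1 W).
  { apply sumR_ext; intros a _. destruct J.
    - rewrite Rplus_0_r, <- sumR_scal. apply sumR_ext; intros. rewrite !binomR_0; ring.
    - rewrite <- sumR_plus, <- sumR_scal. apply sumR_ext; intros. simpl binomR. ring. }
  rewrite E. ring.
Qed.

Lemma sumR_pow_S x f a n : sumR (fun k => / (x ^ S k) * f k) a n = / x * sumR (fun k => / (x ^ k) * f k) a n.
Proof. rewrite <- sumR_scal. apply sumR_ext. intros. destruct (Req_dec x 0) as [->|Hx].
  - rewrite pow_i by lia. rewrite Rinv_0. ring.
  - simpl pow. rewrite Rinv_mult. ring. Qed.

Lemma h_expand I N : h_sym I (S N) = h_sym I N + sumR (fun a => / (INR (S N) ^ a) * h_sym (I - a) N) 1 I.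
Proof.
  induction I.
  - simpl. unfold sumR; simpl. unfold Rsum_list; simpl. ring.
  - rewrite h_sym_S, IHI, (sumR_Sl _ 1 I), (sumR_shift _ 1 I).
    rewrite (sumR_ext (fun k => / INR (S N) ^ S k * h_sym (S I - S k) N) (fun k => / INR (S N) ^ S k * h_sym (I - k) N))
      by (intros; reflexivity).
    rewrite sumR_pow_S. replace (S I - 1)%nat with I by lia. rewrite pow_1. ring.
Qed.

Lemma sumR_cut f n m : (forall a, (n < a)%nat -> f a = 0) -> sumR f 1 (n + m) = sumR f 1 n.
Proof. intros H. rewrite sumR_split. rewrite (sumR_ext f (fun _ => 0) (1 + n) m); [rewrite sumR_zero; ring|].
  intros; apply H; lia. Qed.

Lemma IIa N : forall I J Q, (I + J < Q)%nat -> P J (I + J) Q N = e_sym J N * h_sym I N.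
Proof.
  induction N; intros I J Q HQ.
  - destruct Q; [lia|]. unfold P. rewrite sumR_Sl.
    rewrite (sumR_ext _ (fun _ => 0)). 2:{ intros q Hq. destruct q; [lia|]. rewrite CS_S0; ring. }
    rewrite sumR_zero. destruct J; destruct I; simpl; try rewrite CS_00; try rewrite CS_0S; unfold Rsum_list; simpl; ring.
  - destruct Q; [lia|]. rewrite P_rec. rewrite IHN by auto.
    set (y := fun a => / INR (S N) ^ a).
    assert (T1 : forall a, (1 <= a <= I + J)%nat -> P J (I + J - a) Q N = if Nat.leb a I then e_sym J N * h_sym (I - a) N else 0).
    { intros a Ha. destruct (Nat.leb a I) eqn:E.
      - apply Nat.leb_le in E. replace (I + J - a)%nat with (I - a + J)%nat by lia. apply IHN; lia.
      - apply Nat.leb_gt in E. apply P_zero; lia. }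
    destruct J as [|J'].
    + rewrite (sumR_ext _ (fun a => y a * (if Nat.leb a I then e_sym 0 N * h_sym (I - a) N else 0))).
      2:{ intros a Ha. rewrite T1 by lia. unfold y; ring. }
      rewrite Nat.add_0_r. rewrite (sumR_ext _ (fun a => / INR (S N) ^ a * h_sym (I - a) N)).
      2:{ intros a Ha. rewrite (proj2 (Nat.leb_le a I)) by lia. unfold y; simpl; ring. }
      simpl e_sym. rewrite h_expand. ring.
    + assert (T2 : forall a, (1 <= a <= I + S J')%nat -> P J' (I + S J' - a) Q N = if Nat.leb a (S I) then e_sym J' N * h_sym (S I - a) N else 0).
      { intros a Ha. destruct (Nat.leb a (S I)) eqn:E.
        - apply Nat.leb_le in E. replace (I + S J' - a)%nat with (S I - a + J')%nat by lia. apply IHN; lia.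
        - apply Nat.leb_gt in E. apply P_zero; lia. }
      rewrite (sumR_ext _ (fun a => y a * (if Nat.leb a I then e_sym (S J') N * h_sym (I - a) N else 0) +
                                     y a * (if Nat.leb a (S I) then e_sym J' N * h_sym (S I - a) N else 0))).
      2:{ intros a Ha. rewrite T1, T2 by lia. unfold y; ring. }
      rewrite sumR_plus.
      rewrite (sumR_cut _ I (S J')). 2:{ intros a Ha. rewrite (proj2 (Nat.leb_gt a I)) by lia. ring. }
      replace (I + S J')%nat with (S I + J')%nat by lia.
      rewrite (sumR_cut _ (S I) J'). 2:{ intros a Ha. rewrite (proj2 (Nat.leb_gt a (S I))) by lia. ring. }
      rewrite (sumR_ext (fun a => y a * (if Nat.leb a I then e_sym (S J') N * h_sym (I - a) N else 0))
                        (fun a => e_sym (S J') N * (/ INR (S N) ^ a * h_sym (I - a) N))).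
      2:{ intros a Ha. rewrite (proj2 (Nat.leb_le a I)) by lia. unfold y; ring. }
      rewrite (sumR_ext (fun a => y a * (if Nat.leb a (S I) then e_sym J' N * h_sym (S I - a) N else 0))
                        (fun a => e_sym J' N * (/ INR (S N) ^ a * h_sym (S I - a) N))).
      2:{ intros a Ha. rewrite (proj2 (Nat.leb_le a (S I))) by lia. unfold y; ring. }
      rewrite !sumR_scal. rewrite (sumR_Sl _ 1 I), (sumR_shift _ 1 I).
      rewrite (sumR_ext (fun k => / INR (S N) ^ S k * h_sym (S I - S k) N) (fun k => / INR (S N) ^ S k * h_sym (I - k) N))
        by (intros; reflexivity).
      rewrite sumR_pow_S. replace (S I - 1)%nat with I by lia. rewrite pow_1.
      rewrite e_sym_S, h_expand. ring.
Qed.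

Definition f3 (a : list nat) : bool := match a with a1 :: _ => Nat.leb 3 a1 | [] => false end.
Definition STN w p N := Rsum_list (map (fun a => mzv_partial a N) (filter f3 (compositions p w))).
Definition CSc a1 q V N := Rsum_list (map (fun b => mzv_partial (a1 :: b) N) (compositions q V)).

Lemma CSc_sum a1 q V N : sumR (fun m => / (INR (S m) ^ a1) * CS q V m) 0 N = CSc a1 q V N.
Proof.
  unfold CSc, CS. symmetry.
  rewrite (Rsum_list_map_ext _ _ (fun b => sumR (fun m => / (INR (S m) ^ a1) * mzv_partial b m) 0 N)).
  2:{ intros b _. change (mzv_partial (a1 :: b) N) with (sumR (fun n1 => / (INR n1 ^ a1) * mzv_partial b (n1 - 1)) 1 N).
      rewrite sumR_shift. apply sumR_ext. intros. simpl (S k - 1)%nat. rewrite Nat.sub_0_r. reflexivity. }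
  rewrite Rsum_list_map_sumR. apply sumR_ext. intros m _. rewrite <- Rsum_list_map_scal. reflexivity.
Qed.

Lemma CSc_gt a1 q V N : (V < q)%nat -> CSc a1 q V N = 0.
Proof. intros; unfold CSc; rewrite comp_empty; auto. Qed.

Lemma filter_flat_map_cons (g : list nat -> R) (L : nat -> list (list nat)) l :
  Rsum_list (map g (filter f3 (flat_map (fun a1 => map (cons a1) (L a1)) l))) =
  Rsum_list (map (fun a1 => if Nat.leb 3 a1 then Rsum_list (map (fun b => g (a1 :: b)) (L a1)) else 0) l).
Proof.
  induction l as [|a1 l IH]; [reflexivity|]. cbn [flat_map]. rewrite filter_app, map_app, Rsum_list_app, IH.
  cbn [map]. rewrite Rsum_list_cons. f_equal.
  destruct (Nat.leb 3 a1) eqn:E.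
  - induction (L a1) as [|b L' IHL]; [reflexivity|]. cbn [map filter]. unfold f3 at 1. rewrite E. cbn [map]. rewrite !Rsum_list_cons.
    cbn [map] in IHL. rewrite IHL. reflexivity.
  - induction (L a1) as [|b L' IHL]; [reflexivity|]. cbn [map filter]. unfold f3 at 1. rewrite E. exact IHL.
Qed.

Lemma STN_expand W q N : STN (W + 3) (S q) N = sumR (fun c => CSc (3 + c) q (W - c) N) 0 (S W).
Proof.
  unfold STN. rewrite comp_S, filter_flat_map_cons. rewrite sumR_as_list.
  replace (W + 3)%nat with (2 + S W)%nat by lia. rewrite sumR_split.
  rewrite (sumR_ext _ (fun _ => 0) 1 2). 2:{ intros a Ha. rewrite (proj2 (Nat.leb_gt 3 a)) by lia. reflexivity. }
  rewrite sumR_zero, Rplus_0_l. replace (1 + 2)%nat with 3%nat by lia.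
  rewrite (sumR_shift _ 2), (sumR_shift _ 1), (sumR_shift _ 0).
  apply sumR_ext. intros c Hc. rewrite (proj2 (Nat.leb_le 3 (S (S (S c))))) by lia.
  unfold CSc. repeat f_equal; lia.
Qed.

Lemma IIb_pt J I m : e_sym J m * h_sym I (S m) / INR (S m) ^ 3 =
  sumR (fun c => / (INR (S m) ^ (3 + c)) * P J (I - c + J) (S (I + J)) m) 0 (S I).
Proof.
  rewrite (sumR_ext _ (fun c => / (INR (S m) ^ (3 + c)) * (e_sym J m * h_sym (I - c) m))).
  2:{ intros c Hc. rewrite IIa by lia. ring. }
  rewrite (sumR_ext _ (fun c => / INR (S m) ^ 3 * e_sym J m * (/ (INR (S m) ^ c) * h_sym (I - c) m))).
  2:{ intros. rewrite pow_add, Rinv_mult. ring. }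
  rewrite sumR_scal, sumR_Sl, h_expand. rewrite Nat.sub_0_r, pow_O, Rinv_1. unfold Rdiv. ring.
Qed.

Lemma sumR_split' f a n m k : k = (n + m)%nat -> sumR f a k = sumR f a n + sumR f (a + n) m.
Proof. intros ->; apply sumR_split. Qed.

Lemma IIb J I N : sumR (fun m => e_sym J (m - 1) * h_sym I m / INR m ^ 3) 1 N =
  sumR (fun p => binomR (p - 1) J * STN (I + J + 3) p N) 1 (S (I + J)).
Proof.
  set (W := (I + J)%nat).
  rewrite sumR_shift. rewrite (sumR_ext _ (fun m => sumR (fun c => / (INR (S m) ^ (3 + c)) * P J (I - c + J) (S W) m) 0 (S I))).
  2:{ intros m _. rewrite <- IIb_pt. simpl (S m - 1)%nat. rewrite Nat.sub_0_r. reflexivity. }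
  rewrite sumR_swap.
  rewrite (sumR_ext _ (fun c => sumR (fun q => binomR q J * CSc (3 + c) q (I - c + J) N) 0 (S W))).
  2:{ intros c Hc. unfold P. rewrite (sumR_ext _ (fun m => sumR (fun q => binomR q J * (/ INR (S m) ^ (3 + c) * CS q (I - c + J) m)) 0 (S W))).
      2:{ intros m _. rewrite <- sumR_scal. apply sumR_ext; intros; ring. }
      rewrite sumR_swap. apply sumR_ext. intros q _. rewrite sumR_scal, CSc_sum. reflexivity. }
  assert (R : sumR (fun p => binomR (p - 1) J * STN (W + 3) p N) 1 (S W) =
     sumR (fun c => sumR (fun q => binomR q J * CSc (3 + c) q (W - c) N) 0 (S W)) 0 (S W)).
  { rewrite sumR_shift. rewrite (sumR_ext (fun k => binomR (S k - 1) J * STN (W + 3) (S k) N)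
        (fun q => sumR (fun c => binomR q J * CSc (3 + c) q (W - c) N) 0 (S W))).
    - apply sumR_swap.
    - intros q _. replace (S q - 1)%nat with q by lia. rewrite STN_expand, <- sumR_scal. reflexivity. }
  rewrite R. symmetry.
  rewrite (sumR_split' _ 0 (S I) J (S W)) by (unfold W; lia). rewrite (sumR_ext _ (fun _ => 0) (0 + S I) J).
  2:{ intros c Hc. rewrite (sumR_ext _ (fun _ => 0)); [apply sumR_zero|]. intros q _.
      destruct (le_lt_dec q (W - c)). { rewrite binomR_gt by (unfold W in *; lia). ring. }
      rewrite CSc_gt by lia. ring. }
  rewrite sumR_zero, Rplus_0_r. apply sumR_ext. intros c Hc. apply sumR_ext. intros q _.
  replace (W - c)%nat with (I - c + J)%nat by (unfold W; lia); reflexivity.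
Qed.

Lemma div_nonneg a b : 0 <= a -> 0 <= b -> 0 <= a / b.
Proof. intros Ha [Hb| <-]. { apply Rdiv_le_0_compat; auto. } unfold Rdiv; rewrite Rinv_0; lra. Qed.

Lemma In_le_Rsum {A} (l : list A) g x : (forall y, 0 <= g y) -> In x l -> g x <= Rsum_list (map g l).
Proof.
  intros Hg; induction l as [|y l IH]; intros Hx; [destruct Hx|]. cbn [map]. rewrite Rsum_list_cons.
  destruct Hx as [<-|Hx]. { pose proof (Rsum_list_nonneg l g Hg); lra. }
  specialize (IH Hx); specialize (Hg y); lra.
Qed.

Lemma term_le_sumR f a n k : (forall x, 0 <= f x) -> (a <= k < a + n)%nat -> f k <= sumR f a n.
Proof. intros Hf Hk. unfold sumR. apply In_le_Rsum; auto. apply in_seq; lia. Qed.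

Lemma STN_nonneg w p N : 0 <= STN w p N.
Proof. apply Rsum_list_nonneg. intros; apply mz_nonneg. Qed.

Lemma mz_mono a N : mzv_partial a N <= mzv_partial a (S N).
Proof. destruct a as [|c b]. { simpl; lra. } rewrite mz_S.
  pose proof (mz_nonneg b N). assert (0 <= / INR (S N) ^ c) by (left; apply Rinv_0_lt_compat, pow_lt, INR_S_pos).
  pose proof (Rmult_le_pos _ _ H0 H). lra. Qed.

Lemma mz_conv n p a : (1 <= n)%nat -> (1 <= p <= n)%nat -> In a (filter f3 (compositions p (n + 2))) ->
  exists l, Un_cv (mzv_partial a) l.
Proof.
  intros Hn Hp Ha.
  pose proof (theorem_I (n - 1) 0) as T. set (L := binomR (n - 1 + 0 + 1) (0 + 1) * mzv [(n - 1 + 0 + 2)%nat]) in T.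
  destruct (cv_growing_bounded (mzv_partial a) L) as [l [Hl _]].
  - apply mz_mono.
  - intros N. apply Rle_trans with (STN (n + 2) p N).
    { unfold STN. apply (In_le_Rsum _ (fun b => mzv_partial b N) a); [intros; apply mz_nonneg|exact Ha]. }
    apply Rle_trans with (sumR (fun p => binomR (p - 1) 0 * STN (n - 1 + 0 + 3) p N) 1 (S (n - 1 + 0))).
    { replace (n - 1 + 0 + 3)%nat with (n + 2)%nat by lia.
      eapply Rle_trans; [|apply (term_le_sumR _ _ _ p)].
      - cbv beta. rewrite binomR_0; lra.
      - intros; rewrite binomR_0; rewrite Rmult_1_l; apply STN_nonneg.
      - lia. }
    rewrite <- IIb. eapply Rle_trans; [|apply (psum_le_lim (fun m => e_sym 0 (m - 1) * h_sym (n - 1) m / INR m ^ 2) 1 L N); [|exact T]].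
    + apply sumR_le. intros m. destruct m. { change (INR 0) with 0. rewrite !pow_i by lia. unfold Rdiv; rewrite Rinv_0, !Rmult_0_r; lra. }
      replace (INR (S m) ^ 3) with (INR (S m) ^ 2 * INR (S m)) by ring.
      pose proof (INR_S_pos m). assert (1 <= INR (S m)) by (apply (le_INR 1); lia).
      assert (0 <= e_sym 0 (S m - 1) * h_sym (n - 1) (S m)) by (apply Rmult_le_pos; [apply e_sym_nonneg|apply h_sym_nonneg]).
      unfold Rdiv. apply Rmult_le_compat_l; auto. rewrite Rinv_mult.
      rewrite <- (Rmult_1_r (/ INR (S m) ^ 2)) at 2. apply Rmult_le_compat_l.
      * left; apply Rinv_0_lt_compat, pow_lt; lra.
      * rewrite <- Rinv_1. apply Rinv_le_contravar; lra.
    + intros m. apply div_nonneg; [apply Rmult_le_pos; [apply e_sym_nonneg|apply h_sym_nonneg]|apply pow_le, pos_INR].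
  - exists l; auto.
Qed.

Lemma C_binomR n k : (k <= n)%nat -> C n k = binomR n k.
Proof.
  revert k; induction n; intros k Hk.
  - destruct k; [|lia]. unfold C; simpl; field.
  - destruct k. { rewrite binomR_0. unfold C. rewrite Nat.sub_0_r. simpl (fact 0). simpl INR at 2.
      field. apply INR_fact_neq_0. }
    destruct (Nat.eq_dec k n) as [->|Hne].
    + rewrite binomR_nn. unfold C. rewrite Nat.sub_diag. simpl (fact 0). simpl INR at 3. field. apply INR_fact_neq_0.
    + rewrite <- pascal by lia. simpl binomR. rewrite !IHn by lia. ring.
Qed.

Lemma binomR_1 n : binomR n 1 = INR n.
Proof. induction n; simpl; auto. rewrite IHn, binomR_0. destruct n; simpl; ring. Qed.

Lemma cv_sumR_range (F : nat -> nat -> R) (L : nat -> R) a n :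
  (forall k, (a <= k < a + n)%nat -> Un_cv (fun N => F N k) (L k)) -> Un_cv (fun N => sumR (F N) a n) (sumR L a n).
Proof.
  revert a; induction n; intros a H.
  - rewrite sumR_0; eapply cv_ext; [intro; symmetry; apply sumR_0|]; apply cv_const.
  - eapply cv_ext. { intro N; symmetry; apply sumR_Sl. } rewrite sumR_Sl. apply CV_plus.
    + apply H; lia.
    + apply IHn. intros; apply H; lia.
Qed.

Lemma ST_cv n p : (1 <= n)%nat -> (1 <= p <= n)%nat -> Un_cv (STN (n + 2) p) (S_T (n + 2) p).
Proof.
  intros Hn Hp. unfold STN, S_T. change (fun a : list nat => match a with [] => false | a1 :: _ => Nat.leb 3 a1 end) with f3.
  apply cv_Rsum_list. intros a Ha. destruct (mz_conv n p a Hn Hp Ha) as [l Hl].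
  rewrite (mzv_eq _ _ Hl). exact Hl.
Qed.

Theorem mainTheorem12 (n j : nat) (hn : (1 <= n)%nat) (hj : (j <= n)%nat) :
  infinite_sum
    (fun k => e_sym j (S k) * h_sym (n - j) (S k) / (INR (S k) ^ 2))
    (if Nat.eqb j 0
     then INR (n + 1) * mzv [(n + 2)%nat]
     else Rsum_list (map (fun p => C (p - 1) (j - 1) * S_T (n + 2) p)
                         (seq j (n - j + 1)))
          + C (n + 1) (j + 1) * mzv [(n + 2)%nat]).
Proof.
  set (T := if Nat.eqb j 0 then _ else _).
  assert (Main : Un_cv (fun N => sumR (fun m => e_sym j m * h_sym (n - j) m / INR m ^ 2) 1 N) T).
  2:{ unfold infinite_sum. change (Un_cv (fun K => sum_f_R0 (fun k => e_sym j (S k) * h_sym (n - j) (S k) / INR (S k) ^ 2) K) T).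
      apply cv_ext with (u := fun K => sumR (fun m => e_sym j m * h_sym (n - j) m / INR m ^ 2) 1 (S K)).
      - intros K. rewrite sum_f_R0_sumR, sumR_shift. reflexivity.
      - apply cv_shift, Main. }
  unfold T; clear T. destruct j as [|j'].
  - simpl (Nat.eqb 0 0). cbv iota. pose proof (theorem_I n 0) as TI.
    rewrite !Nat.add_0_r in TI. rewrite binomR_1 in TI. rewrite Nat.sub_0_r.
    eapply cv_ext; [|exact TI]. intros N. apply sumR_ext.
    intros; reflexivity.
  - simpl (Nat.eqb (S j') 0). cbv iota. set (i := (n - S j')%nat).
    apply cv_ext with (u := fun N => sumR (fun m => e_sym (S j') (m - 1) * h_sym i m / INR m ^ 2) 1 N +
                                     sumR (fun m => e_sym j' (m - 1) * h_sym i m / INR m ^ 3) 1 N).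
    { intros N. rewrite <- sumR_plus. apply sumR_ext. intros m Hm. destruct m; [lia|].
      replace (S m - 1)%nat with m by lia. rewrite e_sym_S. pose proof (INR_S_pos m). field. lra. }
    rewrite Rplus_comm. apply CV_plus.
    + pose proof (theorem_I i (S j')) as TI. replace (i + S j')%nat with n in TI by (unfold i; lia).
      rewrite C_binomR by lia.
      replace (n + 1)%nat with (n + 1)%nat by reflexivity. exact TI.
    + eapply cv_ext. { intros N. symmetry. apply IIb. }
      replace (i + j' + 3)%nat with (n + 2)%nat by (unfold i; lia).
      replace (S (i + j')) with n by (unfold i; lia).
      replace (Rsum_list (map (fun p => C (p - 1) (S j' - 1) * S_T (n + 2) p) (seq (S j') (i + 1))))
        with (sumR (fun p => binomR (p - 1) j' * S_T (n + 2) p) 1 n).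
      * apply cv_sumR_range. intros p Hp. apply cv_scal, ST_cv; lia.
      * transitivity (sumR (fun p => C (p - 1) (S j' - 1) * S_T (n + 2) p) (S j') (i + 1)); [|reflexivity].
        rewrite (sumR_split' _ 1 j' (i + 1) n) by (unfold i; lia).
        rewrite (sumR_ext _ (fun _ => 0) 1 j'). 2:{ intros p Hp. rewrite binomR_gt by lia. ring. }
        rewrite sumR_zero, Rplus_0_l. replace (1 + j')%nat with (S j') by lia.
        apply sumR_ext. intros p Hp. rewrite C_binomR by lia. f_equal. f_equal. lia.
Qed.
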